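(* Let $0<\beta<\alpha$ and consider $\frac{dx}{dt}=-\alpha x+f(x,y)$, $\frac{dy}{dt}=\beta y+g(x,y)$, where $f,g$ are real analytic at $(0,0)$, vanish at $(0,0)$ together with their first partial derivatives, and are $C^4$ near a homoclinic solution $\ell(s)=(a(s),b(s))$ of $(0,0)$ which approaches $(0,0)$ along the positive $x$-axis direction as $s\to+\infty$ and along the positive $y$-axis direction as $s\to-\infty$. Let $h$ be continuous (indeed $C^4$) near $\ell$ and let $\omega\in\mathbb R$. Then the integrals $A=\int_{-\infty}^{\infty}(u(s)+v(s))h(a(s),b(s))e^{-\int_0^sE(\tau)d\tau}ds$, $C=\int_{-\infty}^{\infty}(u(s)+v(s))\cos(\omega s)e^{-\int_0^sE(\tau)d\tau}ds$, $S=\int_{-\infty}^{\infty}(u(s)+v(s))\sin(\omega s)e^{-\int_0^sE(\tau)d\tau}ds$ are absolutely convergent.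
   Context: $(u(s),v(s))=\|\ell'(s)\|^{-1}\ell'(s)$ is the unit tangent to $\ell$, and $E(s)=v^2(s)(-\alpha+\partial_xf(\ell(s)))+u^2(s)(\beta+\partial_yg(\ell(s)))-u(s)v(s)(\partial_yf(\ell(s))+\partial_xg(\ell(s)))$. *)

(* Defs.v *)
From Stdlib Require Import Reals.
From Coquelicot Require Import Coquelicot.
Open Scope R_scope.

Definition dx (f : R -> R -> R) (x y : R) : R := Derive (fun t => f t y) x.
Definition dy (f : R -> R -> R) (x y : R) : R := Derive (fun t => f x t) y.

Fixpoint Ck (k : nat) (f : R -> R -> R) (U : R * R -> Prop) : Prop :=
  match k with
  | O => forall p, U p -> continuous (fun q : R * R => f (fst q) (snd q)) p
  | S k' => (forall x y, U (x, y) ->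
               ex_derive (fun t => f t y) x /\ ex_derive (fun t => f x t) y)
            /\ Ck k' (dx f) U /\ Ck k' (dy f) U
  end.

Definition analytic_at0 (f : R -> R -> R) : Prop :=
  exists r : R, 0 < r /\ exists c : nat -> nat -> R,
    forall x y, Rabs x < r -> Rabs y < r ->
      (forall i, ex_series (fun j => Rabs (c i j * x ^ i * y ^ j))) /\
      ex_series (fun i => Series (fun j => Rabs (c i j * x ^ i * y ^ j))) /\
      is_series (fun i => Series (fun j => c i j * x ^ i * y ^ j)) (f x y).

Definition tan_u (a b : R -> R) (s : R) : R :=
  Derive a s / sqrt (Derive a s ^ 2 + Derive b s ^ 2).
Definition tan_v (a b : R -> R) (s : R) : R :=
  Derive b s / sqrt (Derive a s ^ 2 + Derive b s ^ 2).

Definition Efun (alpha beta : R) (f g : R -> R -> R) (a b : R -> R) (s : R) : R :=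
  let u := tan_u a b s in let v := tan_v a b s in
  v ^ 2 * (- alpha + dx f (a s) (b s))
  + u ^ 2 * (beta + dy g (a s) (b s))
  - u * v * (dy f (a s) (b s) + dx g (a s) (b s)).

Definition weight (alpha beta : R) (f g : R -> R -> R) (a b : R -> R) (s : R) : R :=
  (tan_u a b s + tan_v a b s) * exp (- RInt (Efun alpha beta f g a b) 0 s).

Definition abs_conv_integral (F : R -> R) : Prop :=
  ex_RInt_gen (fun s => Rabs (F s)) (Rbar_locally m_infty) (Rbar_locally p_infty).

(* Main.v *)
Require Import Defs.
From Stdlib Require Import Reals Lra Classical.
From Coquelicot Require Import Coquelicot.
Open Scope R_scope.

Lemma between_abs (p q t x0 d : R) :
  Rmin p q <= t <= Rmax p q -> Rabs (p - x0) <= d -> Rabs (q - x0) <= d ->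
  Rabs (t - x0) <= d.
Proof.
  intros Ht Hp Hq. apply Rabs_le_between in Hp. apply Rabs_le_between in Hq.
  apply Rabs_le_between. unfold Rmin, Rmax in Ht.
  destruct (Rle_dec p q); lra.
Qed.

Lemma lip1 (h : R -> R) (p q M : R) :
  (forall x, Rmin p q <= x <= Rmax p q -> ex_derive h x /\ Rabs (Derive h x) <= M) ->
  Rabs (h q - h p) <= M * Rabs (q - p).
Proof.
  intros H.
  destruct (MVT_gen h p q (Derive h)) as [c [Hc Heq]].
  - intros x Hx. apply Derive_correct. apply H; lra.
  - intros x Hx. apply continuity_pt_filterlim. apply (ex_derive_continuous (K:=R_AbsRing) (V:=R_NormedModule)). apply H; lra.
  - rewrite Heq, Rabs_mult. apply Rmult_le_compat_r. apply Rabs_pos. apply H; lra.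
Qed.

Lemma lip2 (g : R -> R -> R) (x0 y0 d M : R) :
  (forall x y, Rabs (x - x0) <= d -> Rabs (y - y0) <= d ->
     ex_derive (fun t => g t y) x /\ ex_derive (fun t => g x t) y /\
     Rabs (dx g x y) <= M /\ Rabs (dy g x y) <= M) ->
  forall x y x' y', Rabs (x - x0) <= d -> Rabs (y - y0) <= d ->
    Rabs (x' - x0) <= d -> Rabs (y' - y0) <= d ->
    Rabs (g x y - g x' y') <= M * (Rabs (x - x') + Rabs (y - y')).
Proof.
  intros H x y x' y' H1 H2 H3 H4.
  replace (g x y - g x' y') with ((g x y - g x' y) + (g x' y - g x' y')) by ring.
  eapply Rle_trans. apply Rabs_triang.
  rewrite Rmult_plus_distr_l. apply Rplus_le_compat.
  - apply (lip1 (fun t => g t y) x' x M).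
    intros t Ht. assert (Rabs (t - x0) <= d) by (eapply between_abs; eauto).
    destruct (H t y) as [A [B [C D]]]; auto.
    apply (lip1 (fun t => g x' t) y' y M).
    intros t Ht. assert (Rabs (t - y0) <= d) by (eapply between_abs; eauto).
    destruct (H x' t) as [A [B [C D]]]; auto.
Qed.

Lemma ball_R (x0 e x : R) : ball x0 e x <-> Rabs (x - x0) < e.
Proof. split; intro H; exact H. Qed.

Lemma ball_RR (x0 y0 e x y : R) : ball (x0, y0) e (x, y) <-> (Rabs (x - x0) < e /\ Rabs (y - y0) < e).
Proof. split; intro H; exact H. Qed.

Lemma local_lip (g : R -> R -> R) (U : R * R -> Prop) x0 y0 eps :
  open U -> U (x0, y0) -> 0 < eps ->
  (forall x y, U (x, y) -> ex_derive (fun t => g t y) x /\ ex_derive (fun t => g x t) y) ->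
  continuous (fun q : R * R => dx g (fst q) (snd q)) (x0, y0) ->
  continuous (fun q : R * R => dy g (fst q) (snd q)) (x0, y0) ->
  exists d, 0 < d /\
    (forall x y, Rabs (x - x0) <= d -> Rabs (y - y0) <= d -> U (x, y)) /\
    forall x y x' y', Rabs (x - x0) <= d -> Rabs (y - y0) <= d ->
    Rabs (x' - x0) <= d -> Rabs (y' - y0) <= d ->
    Rabs (g x y - g x' y') <= (Rabs (dx g x0 y0) + Rabs (dy g x0 y0) + eps)
                               * (Rabs (x - x') + Rabs (y - y')).
Proof.
  intros HU HU0 Heps Hder Hcx Hcy.
  destruct (HU _ HU0) as [e0 He0].
  apply filterlim_locally with (eps := mkposreal eps Heps) in Hcx.
  apply filterlim_locally with (eps := mkposreal eps Heps) in Hcy.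
  destruct Hcx as [e1 He1]. destruct Hcy as [e2 He2].
  set (d := Rmin e0 (Rmin e1 e2) / 2).
  assert (Hd0 : 0 < d).
  { unfold d. assert (0 < Rmin e0 (Rmin e1 e2)) by (apply Rmin_pos; [|apply Rmin_pos]; apply cond_pos). lra. }
  assert (Hd1 : d < e0 /\ d < e1 /\ d < e2).
  { unfold d. pose proof (Rmin_l e0 (Rmin e1 e2)). pose proof (Rmin_r e0 (Rmin e1 e2)).
    pose proof (Rmin_l e1 e2). pose proof (Rmin_r e1 e2).
    pose proof (cond_pos e0). pose proof (cond_pos e1). pose proof (cond_pos e2).
    assert (0 < Rmin e0 (Rmin e1 e2)) by (apply Rmin_pos; [|apply Rmin_pos]; assumption).
    lra. }
  destruct Hd1 as [Hd10 [Hd11 Hd12]].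
  assert (HinU : forall x y, Rabs (x - x0) <= d -> Rabs (y - y0) <= d -> U (x, y)).
  { intros x y Hx Hy. apply He0. apply ball_RR. lra. }
  exists d. split; [exact Hd0|]. split; [exact HinU|].
  apply lip2. intros x y Hx Hy.
  destruct (Hder x y (HinU x y Hx Hy)) as [D1 D2].
  split; [exact D1|]. split; [exact D2|].
  assert (B1 := He1 (x, y) (proj2 (ball_RR _ _ _ _ _) (conj (Rle_lt_trans _ _ _ Hx Hd11) (Rle_lt_trans _ _ _ Hy Hd11)))).
  assert (B2 := He2 (x, y) (proj2 (ball_RR _ _ _ _ _) (conj (Rle_lt_trans _ _ _ Hx Hd12) (Rle_lt_trans _ _ _ Hy Hd12)))).
  change (Rabs (dx g x y - dx g x0 y0) < eps) in B1. change (Rabs (dy g x y - dy g x0 y0) < eps) in B2.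
  pose proof (Rabs_pos (dx g x0 y0)). pose proof (Rabs_pos (dy g x0 y0)).
  assert (T1 : Rabs (dx g x y) <= Rabs (dx g x0 y0) + eps).
  { replace (dx g x y) with ((dx g x y - dx g x0 y0) + dx g x0 y0) by ring.
    eapply Rle_trans. apply Rabs_triang. lra. }
  assert (T2 : Rabs (dy g x y) <= Rabs (dy g x0 y0) + eps).
  { replace (dy g x y) with ((dy g x y - dy g x0 y0) + dy g x0 y0) by ring.
    eapply Rle_trans. apply Rabs_triang. lra. }
  split; lra.
Qed.

Lemma Ck_cont (U : R * R -> Prop) (HU : open U) :
  forall k g, Ck k g U -> forall x0 y0, U (x0, y0) ->
    continuous (fun q : R * R => g (fst q) (snd q)) (x0, y0).
Proof.
  induction k as [|k IH]; intros g Hg x0 y0 H0.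
  - apply Hg. exact H0.
  - destruct Hg as [Hder [Hx Hy]].
    destruct (local_lip g U x0 y0 1 HU H0 Rlt_0_1 Hder (IH _ Hx x0 y0 H0) (IH _ Hy x0 y0 H0))
      as [d [Hd [_ HL]]].
    set (M := Rabs (dx g x0 y0) + Rabs (dy g x0 y0) + 1).
    assert (HM : 0 < M) by (unfold M; pose proof (Rabs_pos (dx g x0 y0)); pose proof (Rabs_pos (dy g x0 y0)); lra).
    apply filterlim_locally. intros eps.
    set (del := Rmin d (eps / (2 * M))).
    assert (Hdel : 0 < del).
    { apply Rmin_pos; [lra|]. pose proof (cond_pos eps). apply Rdiv_lt_0_compat; lra. }
    exists (mkposreal del Hdel). intros [x y] Hb. change (Rabs (x - x0) < del /\ Rabs (y - y0) < del) in Hb.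
    change (Rabs (g x y - g x0 y0) < eps).
    assert (Hdd : del <= d) by apply Rmin_l.
    assert (Hde : del <= eps / (2 * M)) by apply Rmin_r.
    assert (Hx0 : Rabs (x0 - x0) <= d) by (rewrite Rminus_diag, Rabs_R0; lra).
    assert (Hy0 : Rabs (y0 - y0) <= d) by (rewrite Rminus_diag, Rabs_R0; lra).
    pose proof (HL x y x0 y0 ltac:(lra) ltac:(lra) Hx0 Hy0) as HH. fold M in HH.
    eapply Rle_lt_trans. exact HH.
    apply Rlt_le_trans with (M * (2 * del)).
    + apply Rmult_lt_compat_l; lra.
    + replace (M * (2 * del)) with ((2 * M) * del) by ring.
      pose proof (cond_pos eps).
      apply Rmult_le_compat_l with (r := 2 * M) in Hde; [|lra].
      replace (2 * M * (eps / (2 * M))) with (pos eps) in Hde by (field; lra). exact Hde.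
Qed.

Lemma ineq_gron (p q A B L : R) : 0 <= L ->
  Rabs A <= L * (Rabs p + Rabs q) -> Rabs B <= L * (Rabs p + Rabs q) ->
  2 * p * A + 2 * q * B <= 4 * L * (p ^ 2 + q ^ 2).
Proof.
  intros HL HA HB.
  assert (h1 : p * A <= Rabs p * (L * (Rabs p + Rabs q))).
  { eapply Rle_trans. apply Rle_abs. rewrite Rabs_mult. apply Rmult_le_compat_l; auto using Rabs_pos. }
  assert (h2 : q * B <= Rabs q * (L * (Rabs p + Rabs q))).
  { eapply Rle_trans. apply Rle_abs. rewrite Rabs_mult. apply Rmult_le_compat_l; auto using Rabs_pos. }
  assert (hp : p ^ 2 = Rabs p ^ 2) by (rewrite pow2_abs; reflexivity).
  assert (hq : q ^ 2 = Rabs q ^ 2) by (rewrite pow2_abs; reflexivity).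
  rewrite hp, hq.
  assert (0 <= L * (Rabs p - Rabs q) ^ 2) by (apply Rmult_le_pos; [lra| apply pow2_ge_0]).
  nra.
Qed.

Lemma cont_of_derive (a : R -> R) (s : R) (l : R) : is_derive a s l ->
  filterlim a (locally s) (locally (a s)).
Proof.
  intro H. apply (ex_derive_continuous (K:=R_AbsRing) (V:=R_NormedModule)). exists l. exact H.
Qed.

Section Uniq.
Variables (alpha beta : R) (f g : R -> R -> R) (a b : R -> R) (U : R * R -> Prop).
Hypothesis Hal : 0 <= alpha.
Hypothesis Hbe : 0 <= beta.
Hypothesis HU : open U.
Hypothesis Hf : Ck 4 f U.
Hypothesis Hg : Ck 4 g U.
Hypothesis Ha : forall s, is_derive a s (- alpha * a s + f (a s) (b s)).
Hypothesis Hb : forall s, is_derive b s (beta * b s + g (a s) (b s)).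

Lemma local_stay (x0 y0 : R) :
  U (x0, y0) -> - alpha * x0 + f x0 y0 = 0 -> beta * y0 + g x0 y0 = 0 ->
  forall s1, a s1 = x0 -> b s1 = y0 ->
  exists del, 0 < del /\ forall s, s1 <= s <= s1 + del -> a s = x0 /\ b s = y0.
Proof.
  intros HU0 E1 E2 s1 A1 B1.
  destruct Hf as [Hfd [Hfx Hfy]]. destruct Hg as [Hgd [Hgx Hgy]].
  destruct (local_lip f U x0 y0 1 HU HU0 Rlt_0_1 Hfd (Ck_cont U HU 3 _ Hfx x0 y0 HU0)
     (Ck_cont U HU 3 _ Hfy x0 y0 HU0)) as [df [Hdf [_ Lf]]].
  destruct (local_lip g U x0 y0 1 HU HU0 Rlt_0_1 Hgd (Ck_cont U HU 3 _ Hgx x0 y0 HU0)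
     (Ck_cont U HU 3 _ Hgy x0 y0 HU0)) as [dg [Hdg [_ Lg]]].
  set (Mf := Rabs (dx f x0 y0) + Rabs (dy f x0 y0) + 1) in Lf.
  set (Mg := Rabs (dx g x0 y0) + Rabs (dy g x0 y0) + 1) in Lg.
  assert (HMf : 0 <= Mf) by (unfold Mf; pose proof (Rabs_pos (dx f x0 y0)); pose proof (Rabs_pos (dy f x0 y0)); lra).
  assert (HMg : 0 <= Mg) by (unfold Mg; pose proof (Rabs_pos (dx g x0 y0)); pose proof (Rabs_pos (dy g x0 y0)); lra).
  set (L := alpha + beta + Mf + Mg).
  set (d := Rmin df dg).
  assert (Hd : 0 < d) by (apply Rmin_pos; lra).
  assert (Hdf' : d <= df) by apply Rmin_l. assert (Hdg' : d <= dg) by apply Rmin_r.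
  assert (H00 : Rabs (x0 - x0) <= df /\ Rabs (y0 - y0) <= df /\ Rabs (x0 - x0) <= dg /\ Rabs (y0 - y0) <= dg)
    by (rewrite !Rminus_diag, Rabs_R0; lra).
  assert (Bnd : forall x y, Rabs (x - x0) <= d -> Rabs (y - y0) <= d ->
     Rabs (- alpha * x + f x y) <= L * (Rabs (x - x0) + Rabs (y - y0)) /\
     Rabs (beta * y + g x y) <= L * (Rabs (x - x0) + Rabs (y - y0))).
  { intros x y Hx Hy.
    pose proof (Lf x y x0 y0 ltac:(lra) ltac:(lra) ltac:(lra) ltac:(lra)) as F1.
    pose proof (Lg x y x0 y0 ltac:(lra) ltac:(lra) ltac:(lra) ltac:(lra)) as G1.
    pose proof (Rabs_pos (x - x0)). pose proof (Rabs_pos (y - y0)).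
    split.
    - replace (- alpha * x + f x y) with (- alpha * (x - x0) + (f x y - f x0 y0)) by lra.
      eapply Rle_trans. apply Rabs_triang. rewrite Rabs_mult, Rabs_Ropp, (Rabs_right alpha) by lra.
      assert (alpha * Rabs (x - x0) <= alpha * (Rabs (x - x0) + Rabs (y - y0))) by (apply Rmult_le_compat_l; lra).
      assert (beta * (Rabs (x - x0) + Rabs (y - y0)) >= 0) by (apply Rle_ge, Rmult_le_pos; lra).
      assert (Mg * (Rabs (x - x0) + Rabs (y - y0)) >= 0) by (apply Rle_ge, Rmult_le_pos; lra).
      unfold L. nra.
    - replace (beta * y + g x y) with (beta * (y - y0) + (g x y - g x0 y0)) by lra.
      eapply Rle_trans. apply Rabs_triang. rewrite Rabs_mult, (Rabs_right beta) by lra.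
      assert (beta * Rabs (y - y0) <= beta * (Rabs (x - x0) + Rabs (y - y0))) by (apply Rmult_le_compat_l; lra).
      assert (alpha * (Rabs (x - x0) + Rabs (y - y0)) >= 0) by (apply Rle_ge, Rmult_le_pos; lra).
      assert (Mf * (Rabs (x - x0) + Rabs (y - y0)) >= 0) by (apply Rle_ge, Rmult_le_pos; lra).
      unfold L. nra. }
  pose proof (cont_of_derive a s1 _ (Ha s1)) as Ca.
  pose proof (cont_of_derive b s1 _ (Hb s1)) as Cb.
  apply filterlim_locally with (eps := mkposreal d Hd) in Ca.
  apply filterlim_locally with (eps := mkposreal d Hd) in Cb.
  destruct Ca as [ea Hea]. destruct Cb as [eb Heb].
  set (del := Rmin ea eb / 2).
  assert (Hdel : 0 < del) by (unfold del; assert (0 < Rmin ea eb) by (apply Rmin_pos; apply cond_pos); lra).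
  assert (Hdela : del < ea) by (unfold del; pose proof (Rmin_l ea eb); assert (0 < Rmin ea eb) by (apply Rmin_pos; apply cond_pos); lra).
  assert (Hdelb : del < eb) by (unfold del; pose proof (Rmin_r ea eb); assert (0 < Rmin ea eb) by (apply Rmin_pos; apply cond_pos); lra).
  assert (Near : forall s, s1 <= s <= s1 + del -> Rabs (a s - x0) <= d /\ Rabs (b s - y0) <= d).
  { intros s Hs.
    assert (Hb1 : Rabs (s - s1) < ea) by (rewrite Rabs_right; lra).
    assert (Hb2 : Rabs (s - s1) < eb) by (rewrite Rabs_right; lra).
    specialize (Hea s Hb1). specialize (Heb s Hb2).
    change (Rabs (a s - a s1) < d) in Hea. change (Rabs (b s - b s1) < d) in Heb.
    rewrite A1 in Hea. rewrite B1 in Heb. lra. }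
  set (psi := fun s => ((a s - x0)^2 + (b s - y0)^2) * exp (-(4*L)*(s - s1))).
  set (dpsi := fun s => (2*(a s - x0)*Derive a s + 2*(b s - y0)*Derive b s
                    - 4*L*((a s - x0)^2 + (b s - y0)^2)) * exp (-(4*L)*(s - s1))).
  assert (Dpsi : forall s, is_derive psi s (dpsi s)).
  { intro s. unfold psi, dpsi. auto_derive.
    - split; [exists (- alpha * a s + f (a s) (b s)); apply Ha|].
      split; [exists (beta * b s + g (a s) (b s)); apply Hb|]. exact I.
    - set (A := Derive _ s). set (B := Derive (fun x => b x) s). unfold Rminus. set (E := exp _). ring. }
  exists del. split; [exact Hdel|].
  intros s Hs.
  destruct (MVT_gen psi s1 s dpsi) as [c [Hc Heq]].
  { intros x Hx. apply Dpsi. }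
  { intros x Hx. apply continuity_pt_filterlim.
    apply (ex_derive_continuous (K:=R_AbsRing) (V:=R_NormedModule)). exists (dpsi x). apply Dpsi. }
  rewrite Rmin_left in Hc by lra. rewrite Rmax_right in Hc by lra.
  assert (Hc2 : s1 <= c <= s1 + del) by lra.
  destruct (Near c Hc2) as [Nx Ny].
  destruct (Bnd (a c) (b c) Nx Ny) as [Bx By].
  assert (HL : 0 <= L) by (unfold L; lra).
  assert (Dneg : dpsi c <= 0).
  { unfold dpsi. rewrite (is_derive_unique _ _ _ (Ha c)), (is_derive_unique _ _ _ (Hb c)).
    pose proof (ineq_gron (a c - x0) (b c - y0) _ _ L HL Bx By).
    pose proof (exp_pos (-(4*L)*(c - s1))).
    apply Rmult_le_0_r; lra. }
  assert (Hpsi1 : psi s1 = 0) by (unfold psi; rewrite A1, B1; ring).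
  assert (Hps : psi s <= 0).
  { assert (dpsi c * (s - s1) <= 0) by (apply Rmult_le_0_r; lra). lra. }
  unfold psi in Hps.
  pose proof (exp_pos (-(4*L)*(s - s1))).
  assert (Hz : (a s - x0)^2 + (b s - y0)^2 <= 0).
  { destruct (Rle_dec ((a s - x0)^2 + (b s - y0)^2) 0) as [h|h]; [exact h|].
    exfalso. assert (0 < ((a s - x0)^2 + (b s - y0)^2) * exp (-(4*L)*(s - s1))) by (apply Rmult_lt_0_compat; lra). lra. }
  pose proof (pow2_ge_0 (a s - x0)). pose proof (pow2_ge_0 (b s - y0)).
  split; nra.
Qed.

End Uniq.

Section Glob.
Variables (alpha beta : R) (f g : R -> R -> R) (a b : R -> R) (U : R * R -> Prop).
Hypothesis Hal : 0 <= alpha.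
Hypothesis Hbe : 0 <= beta.
Hypothesis HU : open U.
Hypothesis Hf : Ck 4 f U.
Hypothesis Hg : Ck 4 g U.
Hypothesis Ha : forall s, is_derive a s (- alpha * a s + f (a s) (b s)).
Hypothesis Hb : forall s, is_derive b s (beta * b s + g (a s) (b s)).

Lemma stay_forever (x0 y0 : R) :
  U (x0, y0) -> - alpha * x0 + f x0 y0 = 0 -> beta * y0 + g x0 y0 = 0 ->
  forall s0, a s0 = x0 -> b s0 = y0 -> forall t, s0 <= t -> a t = x0 /\ b t = y0.
Proof.
  intros HU0 E1 E2 s0 A0 B0 t Ht.
  set (P := fun s => a s = x0 /\ b s = y0).
  set (Es := fun s => s0 <= s <= t /\ forall sg, s0 <= sg <= s -> P sg).
  assert (Hbd : bound Es) by (exists t; intros x [Hx _]; lra).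
  assert (Es0 : Es s0).
  { split; [lra|]. intros sg Hsg. assert (sg = s0) by lra. subst sg. split; assumption. }
  assert (Hne : exists x, Es x) by (exists s0; exact Es0).
  destruct (completeness Es Hbd Hne) as [m [Hub Hlub]].
  assert (Hs0m : s0 <= m) by (apply Hub; exact Es0).
  assert (Hmt : m <= t) by (apply Hlub; intros x [Hx _]; lra).
  assert (ClA : forall sg, s0 <= sg < m -> P sg).
  { intros sg Hsg. destruct (classic (P sg)) as [h|h]; [exact h|].
    exfalso. assert (m <= sg); [|lra].
    apply Hlub. intros x [Hx1 Hx2]. destruct (Rle_dec x sg) as [l|l]; [exact l|].
    exfalso. apply h. apply Hx2. lra. }
  assert (ClB : P m).
  { destruct (Req_dec m s0) as [e|ne]; [subst m; split; assumption|].
    destruct (classic (P m)) as [h|h]; [exact h|]. exfalso.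
    unfold P in h. apply not_and_or in h.
    destruct h as [h|h].
    - pose proof (cont_of_derive a m _ (Ha m)) as Cm.
      assert (He : 0 < Rabs (a m - x0)) by (apply Rabs_pos_lt; lra).
      apply filterlim_locally with (eps := mkposreal _ He) in Cm.
      destruct Cm as [e He'].
      set (sg := Rmax s0 (m - e / 2)).
      assert (Hsg1 : s0 <= sg) by apply Rmax_l.
      assert (Hsg2 : m - e / 2 <= sg) by apply Rmax_r.
      assert (Hsg3 : sg < m) by (unfold sg; pose proof (cond_pos e); apply Rmax_lub_lt; lra).
      destruct (ClA sg ltac:(lra)) as [As _].
      assert (Rabs (sg - m) < e) by (rewrite Rabs_left by lra; lra).
      specialize (He' sg H). change (Rabs (a sg - a m) < Rabs (a m - x0)) in He'.
      rewrite As in He'. rewrite Rabs_minus_sym in He'. lra.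
    - pose proof (cont_of_derive b m _ (Hb m)) as Cm.
      assert (He : 0 < Rabs (b m - y0)) by (apply Rabs_pos_lt; lra).
      apply filterlim_locally with (eps := mkposreal _ He) in Cm.
      destruct Cm as [e He'].
      set (sg := Rmax s0 (m - e / 2)).
      assert (Hsg1 : s0 <= sg) by apply Rmax_l.
      assert (Hsg2 : m - e / 2 <= sg) by apply Rmax_r.
      assert (Hsg3 : sg < m) by (unfold sg; pose proof (cond_pos e); apply Rmax_lub_lt; lra).
      destruct (ClA sg ltac:(lra)) as [_ Bs].
      assert (Rabs (sg - m) < e) by (rewrite Rabs_left by lra; lra).
      specialize (He' sg H). change (Rabs (b sg - b m) < Rabs (b m - y0)) in He'.
      rewrite Bs in He'. rewrite Rabs_minus_sym in He'. lra. }
  destruct (Req_dec m t) as [e|ne]; [subst m; exact ClB|].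
  exfalso.
  destruct ClB as [Am Bm].
  destruct (local_stay alpha beta f g a b U Hal Hbe HU Hf Hg Ha Hb x0 y0 HU0 E1 E2 m Am Bm) as [del [Hdel Hst]].
  set (s' := Rmin (m + del) t).
  assert (Hs'1 : m < s') by (unfold s'; apply Rmin_glb_lt; lra).
  assert (Hs'2 : s' <= m + del) by apply Rmin_l.
  assert (Hs'3 : s' <= t) by apply Rmin_r.
  assert (Es s').
  { split; [lra|]. intros sg Hsg.
    destruct (Rlt_le_dec sg m) as [l|l]; [apply ClA; lra|].
    apply Hst; lra. }
  apply Hub in H. lra.
Qed.

Lemma no_equil :
  (forall s, U (a s, b s)) -> (forall s, (a s, b s) <> (0, 0)) ->
  is_lim a p_infty 0 -> is_lim b p_infty 0 ->
  forall s, 0 < (- alpha * a s + f (a s) (b s)) ^ 2 + (beta * b s + g (a s) (b s)) ^ 2.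
Proof.
  intros HUl Hnz La Lb s.
  destruct (Rlt_dec 0 ((- alpha * a s + f (a s) (b s)) ^ 2 + (beta * b s + g (a s) (b s)) ^ 2)) as [h|h]; [exact h|].
  exfalso.
  pose proof (pow2_ge_0 (- alpha * a s + f (a s) (b s))). pose proof (pow2_ge_0 (beta * b s + g (a s) (b s))).
  assert (E1 : - alpha * a s + f (a s) (b s) = 0) by nra.
  assert (E2 : beta * b s + g (a s) (b s) = 0) by nra.
  pose proof (stay_forever (a s) (b s) (HUl s) E1 E2 s eq_refl eq_refl) as St.
  assert (La' : is_lim a p_infty (a s)).
  { apply is_lim_ext_loc with (f := fun _ => a s); [|apply is_lim_const].
    exists s. intros y Hy. symmetry. apply St. lra. }
  assert (Lb' : is_lim b p_infty (b s)).
  { apply is_lim_ext_loc with (f := fun _ => b s); [|apply is_lim_const].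
    exists s. intros y Hy. symmetry. apply St. lra. }
  apply is_lim_unique in La. apply is_lim_unique in La'.
  apply is_lim_unique in Lb. apply is_lim_unique in Lb'.
  rewrite La in La'. rewrite Lb in Lb'. injection La' as La'. injection Lb' as Lb'.
  apply (Hnz s). rewrite <- La', <- Lb'. reflexivity.
Qed.

End Glob.

Lemma exp_le' x y : x <= y -> exp x <= exp y.
Proof. intro h. destruct (Rle_lt_or_eq_dec _ _ h) as [l|e]. apply Rlt_le, exp_increasing, l. rewrite e; lra. Qed.

Section Integ.
Variables (H : R -> R) (K c T : R).
Hypothesis Hc : 0 < c.
Hypothesis HK : 0 <= K.
Hypothesis HT : 0 <= T.
Hypothesis Hcont : forall s, continuous H s.
Hypothesis Hpos : forall s, 0 <= H s.
Hypothesis Hr : forall s, T <= s -> H s <= K * exp (- c * s).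
Hypothesis Hl : forall s, s <= - T -> H s <= K * exp (c * s).

Lemma exH x y : ex_RInt H x y.
Proof. apply (ex_RInt_continuous (V:=R_CompleteNormedModule)). intros; apply Hcont. Qed.

Lemma core_right x y : T <= x <= y -> 0 <= RInt H x y <= K / c * exp (- c * x).
Proof.
  intros Hxy. split.
  - apply RInt_ge_0; [lra|apply exH|]. intros; apply Hpos.
  - assert (Hi : is_RInt (fun s => K * exp (- c * s)) x y
                   ((- (K / c) * exp (- c * y)) - (- (K / c) * exp (- c * x)))).
    { apply (is_RInt_derive (fun s => - (K / c) * exp (- c * s))).
      - intros z _. auto_derive; [exact I|]. field. lra.
      - intros z _. apply continuity_pt_filterlim. apply derivable_continuous_pt.
        apply derivable_pt_mult. apply derivable_pt_const.
        apply (derivable_pt_comp (fun s => - c * s) exp).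
        apply derivable_pt_mult. apply derivable_pt_const. apply derivable_pt_id.
        apply derivable_pt_exp. }
    eapply Rle_trans.
    apply RInt_le with (g := fun s => K * exp (- c * s)); [lra|apply exH|eexists; exact Hi|].
    intros z Hz. apply Hr. lra.
    rewrite (is_RInt_unique _ _ _ _ Hi).
    assert (0 <= K / c * exp (- c * y)).
    { apply Rmult_le_pos; [apply Rdiv_le_0_compat; lra|apply Rlt_le, exp_pos]. }
    lra.
Qed.

Lemma core_left x y : x <= y <= - T -> 0 <= RInt H x y <= K / c * exp (c * y).
Proof.
  intros Hxy. split.
  - apply RInt_ge_0; [lra|apply exH|]. intros; apply Hpos.
  - assert (Hi : is_RInt (fun s => K * exp (c * s)) x y
                   (((K / c) * exp (c * y)) - ((K / c) * exp (c * x)))).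
    { apply (is_RInt_derive (fun s => (K / c) * exp (c * s))).
      - intros z _. auto_derive; [exact I|]. field. lra.
      - intros z _. apply continuity_pt_filterlim. apply derivable_continuous_pt.
        apply derivable_pt_mult. apply derivable_pt_const.
        apply (derivable_pt_comp (fun s => c * s) exp).
        apply derivable_pt_mult. apply derivable_pt_const. apply derivable_pt_id.
        apply derivable_pt_exp. }
    eapply Rle_trans.
    apply RInt_le with (g := fun s => K * exp (c * s)); [lra|apply exH|eexists; exact Hi|].
    intros z Hz. apply Hl. lra.
    rewrite (is_RInt_unique _ _ _ _ Hi).
    assert (0 <= K / c * exp (c * x)).
    { apply Rmult_le_pos; [apply Rdiv_le_0_compat; lra|apply Rlt_le, exp_pos]. }
    lra.
Qed.

Lemma RInt_swap' x y : RInt H x y = - RInt H y x.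
Proof. rewrite <- (opp_RInt_swap H y x (exH y x)). reflexivity. Qed.

Lemma tail_right B x y : T <= B -> B <= x -> B <= y ->
  Rabs (RInt H x y) <= K / c * exp (- c * B).
Proof.
  intros HB Hx Hy.
  assert (Hm : forall z, B <= z -> K / c * exp (- c * z) <= K / c * exp (- c * B)).
  { intros z Hz. apply Rmult_le_compat_l; [apply Rdiv_le_0_compat; lra|].
    apply exp_le'. nra. }
  destruct (Rle_dec x y) as [l|l].
  - destruct (core_right x y ltac:(lra)). rewrite Rabs_right by lra.
    specialize (Hm x Hx). lra.
  - rewrite RInt_swap', Rabs_Ropp.
    destruct (core_right y x ltac:(lra)). rewrite Rabs_right by lra.
    specialize (Hm y Hy). lra.
Qed.

Lemma tail_left B x y : T <= B -> x <= - B -> y <= - B ->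
  Rabs (RInt H x y) <= K / c * exp (- c * B).
Proof.
  intros HB Hx Hy.
  assert (Hm : forall z, z <= - B -> K / c * exp (c * z) <= K / c * exp (- c * B)).
  { intros z Hz. apply Rmult_le_compat_l; [apply Rdiv_le_0_compat; lra|].
    apply exp_le'. nra. }
  destruct (Rle_dec x y) as [l|l].
  - destruct (core_left x y ltac:(lra)). rewrite Rabs_right by lra.
    specialize (Hm y Hy). lra.
  - rewrite RInt_swap', Rabs_Ropp.
    destruct (core_left y x ltac:(lra)). rewrite Rabs_right by lra.
    specialize (Hm x Hx). lra.
Qed.

Lemma integ_main : ex_RInt_gen H (Rbar_locally m_infty) (Rbar_locally p_infty).
Proof.
  set (If := fun ab : R * R => RInt H (fst ab) (snd ab)).
  assert (Hc' : exists l, filterlim If (filter_prod (Rbar_locally m_infty) (Rbar_locally p_infty)) (locally l)).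
  { apply (filterlim_locally_cauchy (FF := @filter_prod_proper _ _ _ _ (Rbar_locally_filter _) (Rbar_locally_filter _))).
    intros eps. pose proof (cond_pos eps) as He.
    set (B := T + 2 * K / (c * c * eps) + 1).
    assert (HB0 : 0 <= 2 * K / (c * c * eps)).
    { apply Rdiv_le_0_compat; [lra|]. apply Rmult_lt_0_compat; [nra|lra]. }
    assert (HB : T <= B) by (unfold B; lra).
    assert (Hsmall : K / c * exp (- c * B) < eps / 2).
    { pose proof (exp_ineq1_le (c * B)) as E1.
      pose proof (exp_pos (c * B)).
      assert (Hexp : exp (- c * B) = / exp (c * B)).
      { rewrite <- exp_Ropp. f_equal. ring. }
      rewrite Hexp.
      assert (c * eps * exp (c * B) > 2 * K).
      { set (X := 2 * K / (c * c * eps)) in *.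
        assert (HX : exp (c * B) > c * X).
        { assert (HcB : c * B = c * T + c * X + c) by (unfold B; ring). assert (c * T >= 0) by nra. lra. }
        assert (HcX : c * eps * (c * X) = 2 * K) by (unfold X; field; lra).
        assert (c * eps > 0) by nra.
        rewrite <- HcX. apply Rmult_gt_compat_l; lra. }
      apply Rmult_lt_reg_r with (exp (c * B)); [lra|].
      replace (K / c * / exp (c * B) * exp (c * B)) with (K / c) by (field; lra).
      apply Rmult_lt_reg_l with (2 * c); [lra|].
      replace (2 * c * (K / c)) with (2 * K) by (field; lra). nra. }
    exists (fun ab : R * R => fst ab < - B /\ B < snd ab).
    split.
    - apply Filter_prod with (Q := fun x => x < - B) (R := fun y => B < y).
      + exists (- B). auto.
      + exists B. auto.
      + intros x y Hx Hy. simpl. auto.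
    - intros [x y] [x' y'] [Hx Hy] [Hx' Hy']. simpl in Hx, Hy, Hx', Hy'.
      change (Rabs (If (x', y') - If (x, y)) < eps). unfold If. simpl.
      assert (Heq : RInt H x' y' - RInt H x y = RInt H x' x + RInt H y y').
      { rewrite <- (RInt_Chasles H x' x y' (exH _ _) (exH _ _)).
        rewrite <- (RInt_Chasles H x y y' (exH _ _) (exH _ _)).
        set (A1 := RInt H x' x). set (A2 := RInt H x y). set (A3 := RInt H y y'). change (A1 + (A2 + A3) - A2 = A1 + A3). ring. }
      rewrite Heq. eapply Rle_lt_trans. apply Rabs_triang.
      pose proof (tail_left B x' x HB ltac:(lra) ltac:(lra)).
      pose proof (tail_right B y y' HB ltac:(lra) ltac:(lra)).
      lra. }
  destruct Hc' as [l Hl'].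
  exists l. intros P HP. specialize (Hl' P HP). unfold filtermap in Hl'. unfold filtermapi.
  eapply filter_imp; [|exact Hl'].
  intros [x y] HPx. exists (If (x, y)). split; [|exact HPx].
  apply (RInt_correct (V:=R_CompleteNormedModule)). apply exH.
Qed.

End Integ.

Notation Lc p := (@locally R_UniformSpace p).

Section FL.
Context {F : (R -> Prop) -> Prop} {FF : Filter F}.

Lemma fl_eq (A : R -> R) (p p' : R) : filterlim A F (Lc p) -> p = p' -> filterlim A F (Lc p').
Proof. intros H e; subst; exact H. Qed.

Lemma fl_const p : filterlim (fun _ => p) F (Lc p).
Proof. apply filterlim_const. Qed.

Lemma fl_plus A B p q : filterlim A F (Lc p) -> filterlim B F (Lc q) ->
  filterlim (fun s => A s + B s) F (Lc (p + q)).
Proof.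
  intros HA HB. eapply filterlim_comp_2; [exact HA|exact HB|].
  apply (filterlim_plus (V := R_NormedModule)).
Qed.

Lemma fl_mult A B p q : filterlim A F (Lc p) -> filterlim B F (Lc q) ->
  filterlim (fun s => A s * B s) F (Lc (p * q)).
Proof.
  intros HA HB. eapply filterlim_comp_2; [exact HA|exact HB|].
  apply (filterlim_Rbar_mult p q (p * q)). reflexivity.
Qed.

Lemma fl_opp A p : filterlim A F (Lc p) -> filterlim (fun s => - A s) F (Lc (- p)).
Proof.
  intros HA. replace (- p) with ((-1) * p) by ring.
  eapply filterlim_ext; [|apply fl_mult; [apply fl_const|exact HA]].
  intro; simpl; ring.
Qed.

Lemma fl_minus A B p q : filterlim A F (Lc p) -> filterlim B F (Lc q) ->
  filterlim (fun s => A s - B s) F (Lc (p - q)).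
Proof. intros; apply fl_plus; auto. apply fl_opp; auto. Qed.

Lemma fl_inv A p : p <> 0 -> filterlim A F (Lc p) -> filterlim (fun s => / A s) F (Lc (/ p)).
Proof.
  intros Hp HA. eapply filterlim_comp; [exact HA|]. apply continuous_Rinv. exact Hp.
Qed.

Lemma fl_div A B p q : q <> 0 -> filterlim A F (Lc p) -> filterlim B F (Lc q) ->
  filterlim (fun s => A s / B s) F (Lc (p / q)).
Proof. intros; apply fl_mult; auto. apply fl_inv; auto. Qed.

Lemma fl_sqrt A p : filterlim A F (Lc p) -> filterlim (fun s => sqrt (A s)) F (Lc (sqrt p)).
Proof.
  intros HA. eapply filterlim_comp; [exact HA|]. apply continuous_sqrt.
Qed.

Lemma fl_pow2 A p : filterlim A F (Lc p) -> filterlim (fun s => A s ^ 2) F (Lc (p ^ 2)).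
Proof.
  intros HA. eapply filterlim_ext; [|eapply fl_eq; [apply fl_mult; [exact HA|exact HA]|]].
  intro; simpl; ring. simpl; ring.
Qed.

Lemma fl_abs0 A : filterlim (fun s => Rabs (A s)) F (Lc 0) -> filterlim A F (Lc 0).
Proof.
  intros HA. apply filterlim_locally. intros eps.
  apply filterlim_locally with (eps := eps) in HA.
  eapply filter_imp; [|exact HA]. intros s Hs.
  change (Rabs (Rabs (A s) - 0) < eps) in Hs. change (Rabs (A s - 0) < eps).
  rewrite Rminus_0_r in *. rewrite Rabs_Rabsolu in Hs. exact Hs.
Qed.

Lemma fl_pair2 (G : R -> R -> R) A B p q :
  continuous (fun z : R * R => G (fst z) (snd z)) (p, q) ->
  filterlim A F (Lc p) -> filterlim B F (Lc q) ->
  filterlim (fun s => G (A s) (B s)) F (Lc (G p q)).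
Proof.
  intros HG HA HB.
  apply (filterlim_comp _ _ _ (fun s => (A s, B s)) (fun z : R * R => G (fst z) (snd z)) F (@locally (prod_UniformSpace R_UniformSpace R_UniformSpace) (p, q))); [|exact HG].
  intros P [eps HP].
  apply filterlim_locally with (eps := eps) in HA.
  apply filterlim_locally with (eps := eps) in HB.
  unfold filtermap. eapply filter_imp; [|apply (filter_and _ _ HA HB)].
  intros s [h1 h2]. apply HP. split; assumption.
Qed.

End FL.

Lemma tan_id (D1 D2 r : R) : 0 < r -> 0 < D1 ^ 2 + D2 ^ 2 ->
  D1 / sqrt (D1 ^ 2 + D2 ^ 2) = (D1 / r) / sqrt ((D1 / r) ^ 2 + (D2 / r) ^ 2).
Proof.
  intros Hr HD.
  replace ((D1 / r) ^ 2 + (D2 / r) ^ 2) with ((D1 ^ 2 + D2 ^ 2) / r ^ 2) by (field; lra).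
  rewrite sqrt_div_alt by (apply pow_lt; lra).
  rewrite sqrt_pow2 by lra.
  pose proof (sqrt_lt_R0 _ HD). field. lra.
Qed.

Section Asym.
Variables (alpha beta : R) (f g : R -> R -> R) (a b : R -> R) (U : R * R -> Prop).
Hypothesis HU : open U.
Hypothesis HU0 : U (0, 0).
Hypothesis Hf : Ck 4 f U.
Hypothesis Hg : Ck 4 g U.
Hypothesis f00 : f 0 0 = 0.
Hypothesis g00 : g 0 0 = 0.
Hypothesis fx0 : dx f 0 0 = 0.
Hypothesis fy0 : dy f 0 0 = 0.
Hypothesis gx0 : dx g 0 0 = 0.
Hypothesis gy0 : dy g 0 0 = 0.
Hypothesis Ha : forall s, is_derive a s (- alpha * a s + f (a s) (b s)).
Hypothesis Hb : forall s, is_derive b s (beta * b s + g (a s) (b s)).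
Hypothesis Hnz : forall s, 0 < a s ^ 2 + b s ^ 2.
Hypothesis Hpos : forall s, 0 < (- alpha * a s + f (a s) (b s)) ^ 2 + (beta * b s + g (a s) (b s)) ^ 2.

Definition rr s := sqrt (a s ^ 2 + b s ^ 2).

Lemma rr_pos s : 0 < rr s.
Proof. apply sqrt_lt_R0, Hnz. Qed.

Lemma abs_le_r s : Rabs (a s) <= rr s /\ Rabs (b s) <= rr s.
Proof.
  pose proof (rr_pos s). assert (H2 : rr s ^ 2 = a s ^ 2 + b s ^ 2) by (apply pow2_sqrt; apply Rlt_le, Hnz).
  pose proof (pow2_abs (a s)). pose proof (pow2_abs (b s)).
  pose proof (Rabs_pos (a s)). pose proof (Rabs_pos (b s)).
  pose proof (pow2_ge_0 (a s)). pose proof (pow2_ge_0 (b s)).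
  split; nra.
Qed.

Lemma Nu_eq s : tan_u a b s = (- alpha * (a s / rr s) + f (a s) (b s) / rr s) /
   sqrt ((- alpha * (a s / rr s) + f (a s) (b s) / rr s) ^ 2 + (beta * (b s / rr s) + g (a s) (b s) / rr s) ^ 2).
Proof.
  unfold tan_u. rewrite (is_derive_unique _ _ _ (Ha s)), (is_derive_unique _ _ _ (Hb s)).
  pose proof (rr_pos s).
  rewrite (tan_id (- alpha * a s + f (a s) (b s)) (beta * b s + g (a s) (b s)) (rr s) H (Hpos s)).
  f_equal; [field; lra|]. f_equal. f_equal; f_equal; field; lra.
Qed.

Lemma Nv_eq s : tan_v a b s = (beta * (b s / rr s) + g (a s) (b s) / rr s) /
   sqrt ((- alpha * (a s / rr s) + f (a s) (b s) / rr s) ^ 2 + (beta * (b s / rr s) + g (a s) (b s) / rr s) ^ 2).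
Proof.
  unfold tan_v. rewrite (is_derive_unique _ _ _ (Ha s)), (is_derive_unique _ _ _ (Hb s)).
  pose proof (rr_pos s).
  pose proof (tan_id (beta * b s + g (a s) (b s)) (- alpha * a s + f (a s) (b s)) (rr s) H ltac:(rewrite Rplus_comm; apply Hpos)) as T.
  rewrite (Rplus_comm ((beta * b s + g (a s) (b s)) ^ 2)) in T.
  rewrite (Rplus_comm (((beta * b s + g (a s) (b s)) / rr s) ^ 2)) in T.
  rewrite T.
  f_equal; [field; lra|]. f_equal. f_equal; f_equal; field; lra.
Qed.

Context {F : (R -> Prop) -> Prop} {FF : Filter F}.
Hypothesis La : filterlim a F (Lc 0).
Hypothesis Lb : filterlim b F (Lc 0).

Lemma small_h (h : R -> R -> R) : Ck 4 h U -> h 0 0 = 0 -> dx h 0 0 = 0 -> dy h 0 0 = 0 ->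
  filterlim (fun s => h (a s) (b s) / rr s) F (Lc 0).
Proof.
  intros Hh h00 hx0 hy0.
  destruct Hh as [Hd [Hx Hy]].
  apply filterlim_locally. intros eps. pose proof (cond_pos eps) as He.
  assert (He4 : 0 < eps / 4) by lra.
  destruct (local_lip h U 0 0 (eps / 4) HU HU0 He4 Hd (Ck_cont U HU 3 _ Hx 0 0 HU0)
     (Ck_cont U HU 3 _ Hy 0 0 HU0)) as [d [Hd0 [_ HL]]].
  rewrite hx0, hy0, Rabs_R0 in HL.
  apply filterlim_locally with (eps := mkposreal d Hd0) in La.
  apply filterlim_locally with (eps := mkposreal d Hd0) in Lb.
  eapply filter_imp; [|apply (filter_and _ _ La Lb)].
  intros s [h1 h2]. change (Rabs (a s - 0) < d) in h1. change (Rabs (b s - 0) < d) in h2.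
  change (Rabs (h (a s) (b s) / rr s - 0) < eps).
  assert (H00 : Rabs (0 - 0) <= d) by (rewrite Rminus_0_r, Rabs_R0; lra).
  pose proof (HL (a s) (b s) 0 0 ltac:(lra) ltac:(lra) H00 H00) as HH.
  rewrite h00, !Rminus_0_r in HH. rewrite Rminus_0_r in *.
  pose proof (rr_pos s). destruct (abs_le_r s).
  unfold Rdiv. rewrite Rabs_mult, Rabs_Rinv by lra. rewrite (Rabs_right (rr s)) by lra.
  apply Rmult_lt_reg_r with (rr s); [lra|].
  rewrite Rmult_assoc, Rinv_l, Rmult_1_r by lra.
  nra.
Qed.

Variables (pa pb : R).
Hypothesis Hpa : filterlim (fun s => a s / rr s) F (Lc pa).
Hypothesis Hpb : filterlim (fun s => b s / rr s) F (Lc pb).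
Hypothesis HD : 0 < (alpha * pa) ^ 2 + (beta * pb) ^ 2.

Let SD := sqrt ((alpha * pa) ^ 2 + (beta * pb) ^ 2).

Lemma SD_pos : 0 < SD.
Proof. apply sqrt_lt_R0, HD. Qed.

Lemma lim_Nu : filterlim (fun s => - alpha * (a s / rr s) + f (a s) (b s) / rr s) F (Lc (- alpha * pa)).
Proof.
  eapply fl_eq. apply fl_plus. apply fl_mult. apply fl_const. exact Hpa.
  apply small_h; auto. ring.
Qed.

Lemma lim_Nv : filterlim (fun s => beta * (b s / rr s) + g (a s) (b s) / rr s) F (Lc (beta * pb)).
Proof.
  eapply fl_eq. apply fl_plus. apply fl_mult. apply fl_const. exact Hpb.
  apply small_h; auto. ring.
Qed.

Lemma lim_den : filterlim (fun s => sqrt ((- alpha * (a s / rr s) + f (a s) (b s) / rr s) ^ 2 + (beta * (b s / rr s) + g (a s) (b s) / rr s) ^ 2)) F (Lc SD).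
Proof.
  unfold SD. apply fl_sqrt. eapply fl_eq. apply fl_plus; apply fl_pow2. apply lim_Nu. apply lim_Nv. ring.
Qed.

Lemma lim_u : filterlim (tan_u a b) F (Lc (- alpha * pa / SD)).
Proof.
  eapply filterlim_ext. intro s. symmetry. apply Nu_eq.
  apply fl_div. pose proof SD_pos; lra. apply lim_Nu. apply lim_den.
Qed.

Lemma lim_v : filterlim (tan_v a b) F (Lc (beta * pb / SD)).
Proof.
  eapply filterlim_ext. intro s. symmetry. apply Nv_eq.
  apply fl_div. pose proof SD_pos; lra. apply lim_Nv. apply lim_den.
Qed.

Lemma lim_partial (h : R -> R -> R) (k : nat) : Ck k h U ->
  filterlim (fun s => h (a s) (b s)) F (Lc (h 0 0)).
Proof.
  intro Hh. apply fl_pair2; auto. apply (Ck_cont U HU k h Hh 0 0 HU0).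
Qed.

Lemma lim_E : filterlim (Efun alpha beta f g a b) F
  (Lc ((beta * pb / SD) ^ 2 * (- alpha) + (- alpha * pa / SD) ^ 2 * beta)).
Proof.
  destruct Hf as [_ [Hfx Hfy]]. destruct Hg as [_ [Hgx Hgy]].
  eapply filterlim_ext. intro s. unfold Efun. cbv zeta. reflexivity.
  eapply fl_eq.
  apply fl_minus. apply fl_plus.
  apply fl_mult. apply fl_pow2. apply lim_v. apply fl_plus. apply fl_const. apply (lim_partial (dx f) 3 Hfx).
  apply fl_mult. apply fl_pow2. apply lim_u. apply fl_plus. apply fl_const. apply (lim_partial (dy g) 3 Hgy).
  apply fl_mult. apply fl_mult. apply lim_u. apply lim_v. apply fl_plus. apply (lim_partial (dy f) 3 Hfy). apply (lim_partial (dx g) 3 Hgx).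
  rewrite fx0, fy0, gx0, gy0. ring.
Qed.

End Asym.

Lemma exRC (E : R -> R) x y : (forall s, continuous E s) -> ex_RInt E x y.
Proof. intro h. apply (ex_RInt_continuous (V:=R_CompleteNormedModule)). intros; apply h. Qed.

Lemma RInt_const' c x y : RInt (fun _ => c) x y = (y - x) * c.
Proof. rewrite (RInt_const (V:=R_CompleteNormedModule)). reflexivity. Qed.

Lemma exp_bound (E : R -> R) c T : 0 < c -> 0 <= T -> (forall s, continuous E s) ->
  (forall s, T <= s -> c <= E s) -> (forall s, s <= - T -> E s <= - c) ->
  (forall s, T <= s -> exp (- RInt E 0 s) <= exp (- RInt E 0 T + c * T) * exp (- c * s)) /\
  (forall s, s <= - T -> exp (- RInt E 0 s) <= exp (- RInt E 0 (- T) + c * T) * exp (c * s)).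
Proof.
  intros Hc HT HE Hr Hl. split.
  - intros s Hs. rewrite <- exp_plus. apply exp_le'.
    rewrite <- (RInt_Chasles (V:=R_CompleteNormedModule) E 0 T s (exRC _ _ _ HE) (exRC _ _ _ HE)).
    change (plus ?u ?v) with (u + v).
    assert (RInt (fun _ => c) T s <= RInt E T s).
    { apply RInt_le; [lra|apply exRC; intro; apply continuous_const|apply exRC, HE|].
      intros; apply Hr; lra. }
    rewrite RInt_const' in H. nra.
  - intros s Hs. rewrite <- exp_plus. apply exp_le'.
    rewrite <- (RInt_Chasles (V:=R_CompleteNormedModule) E 0 (- T) s (exRC _ _ _ HE) (exRC _ _ _ HE)).
    change (plus ?u ?v) with (u + v).
    rewrite (RInt_swap' E (fun s => HE s) (- T) s).
    assert (RInt E s (- T) <= RInt (fun _ => - c) s (- T)).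
    { apply RInt_le; [lra|apply exRC, HE|apply exRC; intro; apply continuous_const|].
      intros; apply Hl; lra. }
    rewrite RInt_const' in H. nra.
Qed.

Lemma conclude (W Z : R -> R) c C T Mz : 0 < c -> 0 <= T -> 0 <= C -> 0 <= Mz ->
  (forall s, continuous W s) -> (forall s, continuous Z s) ->
  (forall s, T <= s -> Rabs (W s) <= C * exp (- c * s)) ->
  (forall s, s <= - T -> Rabs (W s) <= C * exp (c * s)) ->
  (forall s, T <= Rabs s -> Rabs (Z s) <= Mz) ->
  abs_conv_integral (fun s => W s * Z s).
Proof.
  intros Hc HT HC HM CW CZ Wr Wl Zb.
  unfold abs_conv_integral.
  apply (integ_main (fun s => Rabs (W s * Z s)) (C * Mz) c T Hc); auto.
  - apply Rmult_le_pos; auto.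
  - intro s. apply continuous_Rabs_comp. apply (continuous_mult (K:=R_AbsRing)); auto.
  - intro; apply Rabs_pos.
  - intros s Hs. rewrite Rabs_mult.
    assert (Rabs (Z s) <= Mz) by (apply Zb; rewrite Rabs_right; lra).
    specialize (Wr s Hs). pose proof (Rabs_pos (W s)). pose proof (Rabs_pos (Z s)).
    pose proof (exp_pos (- c * s)).
    replace (C * Mz * exp (- c * s)) with ((C * exp (- c * s)) * Mz) by ring.
    apply Rmult_le_compat; auto.
  - intros s Hs. rewrite Rabs_mult.
    assert (Rabs (Z s) <= Mz) by (apply Zb; rewrite Rabs_left1; lra).
    specialize (Wl s Hs). pose proof (Rabs_pos (W s)). pose proof (Rabs_pos (Z s)).
    replace (C * Mz * exp (c * s)) with ((C * exp (c * s)) * Mz) by ring.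
    apply Rmult_le_compat; auto.
Qed.

Lemma comp_lim {F : (R -> Prop) -> Prop} {FF : Filter F} (a b : R -> R) :
  (forall s, 0 < a s ^ 2 + b s ^ 2) ->
  filterlim (fun s => a s / sqrt (a s ^ 2 + b s ^ 2)) F (Lc 1) ->
  filterlim (fun s => b s / sqrt (a s ^ 2 + b s ^ 2)) F (Lc 0).
Proof.
  intros Hnz Hl. apply fl_abs0.
  apply filterlim_ext with (f := fun s => sqrt (1 - (a s / sqrt (a s ^ 2 + b s ^ 2)) ^ 2)).
  - intro s. pose proof (Hnz s). pose proof (sqrt_lt_R0 _ H).
    assert (H2 : sqrt (a s ^ 2 + b s ^ 2) ^ 2 = a s ^ 2 + b s ^ 2) by (apply pow2_sqrt; lra).
    replace (1 - (a s / sqrt (a s ^ 2 + b s ^ 2)) ^ 2) with ((b s / sqrt (a s ^ 2 + b s ^ 2))²).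
    + apply sqrt_Rsqr_abs.
    + rewrite Rsqr_pow2. set (r := sqrt (a s ^ 2 + b s ^ 2)) in *.
      replace ((b s / r) ^ 2) with (b s ^ 2 / r ^ 2) by (field; lra).
      replace ((a s / r) ^ 2) with (a s ^ 2 / r ^ 2) by (field; lra).
      rewrite H2. field. lra.
  - eapply fl_eq. apply fl_sqrt. apply fl_minus. apply fl_const. apply fl_pow2. exact Hl.
    replace (1 - 1 ^ 2) with 0 by ring. apply sqrt_0.
Qed.

Lemma fl_comp1 {F : (R -> Prop) -> Prop} {FF : Filter F} (k : R -> R) A p :
  continuous k p -> filterlim A F (Lc p) -> filterlim (fun s => k (A s)) F (Lc (k p)).
Proof. intros Hk HA. eapply filterlim_comp; [exact HA|exact Hk]. Qed.

Lemma val_p (alpha beta : R) : 0 < alpha ->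
  (beta * 0 / sqrt ((alpha * 1) ^ 2 + (beta * 0) ^ 2)) ^ 2 * (- alpha) +
  (- alpha * 1 / sqrt ((alpha * 1) ^ 2 + (beta * 0) ^ 2)) ^ 2 * beta = beta.
Proof.
  intro h. replace ((alpha * 1) ^ 2 + (beta * 0) ^ 2) with (alpha ^ 2) by ring.
  rewrite sqrt_pow2 by lra. field. lra.
Qed.

Lemma val_m (alpha beta : R) : 0 < beta ->
  (beta * 1 / sqrt ((alpha * 0) ^ 2 + (beta * 1) ^ 2)) ^ 2 * (- alpha) +
  (- alpha * 0 / sqrt ((alpha * 0) ^ 2 + (beta * 1) ^ 2)) ^ 2 * beta = - alpha.
Proof.
  intro h. replace ((alpha * 0) ^ 2 + (beta * 1) ^ 2) with (beta ^ 2) by ring.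
  rewrite sqrt_pow2 by lra. field. lra.
Qed.

Lemma tan_bound (D1 D2 : R) : 0 < D1 ^ 2 + D2 ^ 2 -> Rabs (D1 / sqrt (D1 ^ 2 + D2 ^ 2)) <= 1.
Proof.
  intro h. pose proof (sqrt_lt_R0 _ h).
  unfold Rdiv. rewrite Rabs_mult, Rabs_Rinv by lra. rewrite (Rabs_right (sqrt _)) by lra.
  apply Rmult_le_reg_r with (sqrt (D1 ^ 2 + D2 ^ 2)); [lra|].
  rewrite Rmult_assoc, Rinv_l, Rmult_1_r, Rmult_1_l by lra.
  rewrite <- sqrt_pow2 with (x := Rabs D1) by apply Rabs_pos.
  apply sqrt_le_1_alt. rewrite pow2_abs. pose proof (pow2_ge_0 D2). lra.
Qed.

Theorem lemma3 (alpha beta : R) (f g h : R -> R -> R) (a b : R -> R)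
  (U : R * R -> Prop) (omega : R) :
  0 < beta -> beta < alpha ->
  analytic_at0 f -> analytic_at0 g ->
  f 0 0 = 0 -> is_derive (fun t => f t 0) 0 0 -> is_derive (fun t => f 0 t) 0 0 ->
  g 0 0 = 0 -> is_derive (fun t => g t 0) 0 0 -> is_derive (fun t => g 0 t) 0 0 ->
  open U -> U (0, 0) -> (forall s, U (a s, b s)) ->
  Ck 4 f U -> Ck 4 g U -> Ck 4 h U ->
  (forall s, is_derive a s (- alpha * a s + f (a s) (b s))) ->
  (forall s, is_derive b s (beta * b s + g (a s) (b s))) ->
  (forall s, (a s, b s) <> (0, 0)) ->
  is_lim a p_infty 0 -> is_lim b p_infty 0 ->
  is_lim a m_infty 0 -> is_lim b m_infty 0 ->
  is_lim (fun s => a s / sqrt (a s ^ 2 + b s ^ 2)) p_infty 1 ->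
  is_lim (fun s => b s / sqrt (a s ^ 2 + b s ^ 2)) m_infty 1 ->
  abs_conv_integral (fun s => weight alpha beta f g a b s * h (a s) (b s)) /\
  abs_conv_integral (fun s => weight alpha beta f g a b s * cos (omega * s)) /\
  abs_conv_integral (fun s => weight alpha beta f g a b s * sin (omega * s)).
Proof.
  intros Hbe Hab _ _ f00 Hfx0 Hfy0 g00 Hgx0 Hgy0 HU HU0 HUl Hf Hg Hh Ha Hb Hnz0
    Lap Lbp Lam Lbm Hap Hbm.
  assert (fx0 : dx f 0 0 = 0) by exact (is_derive_unique _ _ _ Hfx0).
  assert (fy0 : dy f 0 0 = 0) by exact (is_derive_unique _ _ _ Hfy0).
  assert (gx0 : dx g 0 0 = 0) by exact (is_derive_unique _ _ _ Hgx0).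
  assert (gy0 : dy g 0 0 = 0) by exact (is_derive_unique _ _ _ Hgy0).
  assert (Hal : 0 < alpha) by lra.
  assert (Hnz : forall s, 0 < a s ^ 2 + b s ^ 2).
  { intro s. pose proof (pow2_ge_0 (a s)). pose proof (pow2_ge_0 (b s)).
    destruct (Req_dec (a s) 0) as [e1|n1].
    - destruct (Req_dec (b s) 0) as [e2|n2].
      + exfalso. apply (Hnz0 s). rewrite e1, e2. reflexivity.
      + assert (0 < b s ^ 2) by (apply pow2_gt_0; exact n2). lra.
    - assert (0 < a s ^ 2) by (apply pow2_gt_0; exact n1). lra. }
  pose proof (no_equil alpha beta f g a b U ltac:(lra) ltac:(lra) HU Hf Hg Ha Hb HUl Hnz0 Lap Lbp) as Hpos.
  set (E := Efun alpha beta f g a b).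
  assert (Ca : forall s, filterlim a (locally s) (Lc (a s))) by (intro s; exact (cont_of_derive a s _ (Ha s))).
  assert (Cb : forall s, filterlim b (locally s) (Lc (b s))) by (intro s; exact (cont_of_derive b s _ (Hb s))).
  assert (C2 : forall (k : R -> R -> R) n, Ck n k U -> forall s,
             filterlim (fun t => k (a t) (b t)) (locally s) (Lc (k (a s) (b s)))).
  { intros k n Hk s. apply fl_pair2; auto. apply (Ck_cont U HU n k Hk _ _ (HUl s)). }
  destruct Hf as [Hf1 [Hfx Hfy]]. destruct Hg as [Hg1 [Hgx Hgy]].
  assert (Hf' : Ck 4 f U) by (split; [exact Hf1|split; assumption]).
  assert (Hg' : Ck 4 g U) by (split; [exact Hg1|split; assumption]).
  set (F1 := fun s => - alpha * a s + f (a s) (b s)).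
  set (F2 := fun s => beta * b s + g (a s) (b s)).
  assert (CF1 : forall s, filterlim F1 (locally s) (Lc (F1 s))).
  { intro s. apply fl_plus. apply fl_mult. apply fl_const. apply Ca. apply (C2 f 4%nat Hf'). }
  assert (CF2 : forall s, filterlim F2 (locally s) (Lc (F2 s))).
  { intro s. apply fl_plus. apply fl_mult. apply fl_const. apply Cb. apply (C2 g 4%nat Hg'). }
  assert (Tu : forall s, tan_u a b s = F1 s / sqrt (F1 s ^ 2 + F2 s ^ 2)).
  { intro s. unfold tan_u. rewrite (is_derive_unique _ _ _ (Ha s)), (is_derive_unique _ _ _ (Hb s)). reflexivity. }
  assert (Tv : forall s, tan_v a b s = F2 s / sqrt (F1 s ^ 2 + F2 s ^ 2)).
  { intro s. unfold tan_v. rewrite (is_derive_unique _ _ _ (Ha s)), (is_derive_unique _ _ _ (Hb s)). reflexivity. }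
  assert (Cden : forall s, filterlim (fun t => sqrt (F1 t ^ 2 + F2 t ^ 2)) (locally s) (Lc (sqrt (F1 s ^ 2 + F2 s ^ 2)))).
  { intro s. apply fl_sqrt. apply fl_plus; apply fl_pow2; auto. }
  assert (Hden : forall s, sqrt (F1 s ^ 2 + F2 s ^ 2) <> 0).
  { intro s. pose proof (sqrt_lt_R0 _ (Hpos s)). unfold F1, F2. lra. }
  assert (CTu : forall s, filterlim (tan_u a b) (locally s) (Lc (tan_u a b s))).
  { intro s. eapply filterlim_ext. intro t; symmetry; apply Tu. rewrite Tu. apply fl_div; auto. }
  assert (CTv : forall s, filterlim (tan_v a b) (locally s) (Lc (tan_v a b s))).
  { intro s. eapply filterlim_ext. intro t; symmetry; apply Tv. rewrite Tv. apply fl_div; auto. }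
  assert (CE : forall s, continuous E s).
  { intro s. unfold continuous.
    eapply filterlim_ext. intro t. unfold E, Efun. cbv zeta. reflexivity.
    unfold E, Efun. cbv zeta.
    apply fl_minus. apply fl_plus.
    apply fl_mult. apply fl_pow2; auto. apply fl_plus. apply fl_const. apply (C2 _ 3%nat Hfx).
    apply fl_mult. apply fl_pow2; auto. apply fl_plus. apply fl_const. apply (C2 _ 3%nat Hgy).
    apply fl_mult. apply fl_mult; auto. apply fl_plus. apply (C2 _ 3%nat Hfy). apply (C2 _ 3%nat Hgx). }
  assert (CI : forall s, filterlim (fun t => RInt E 0 t) (locally s) (Lc (RInt E 0 s))).
  { intro s. apply (cont_of_derive _ s (E s)).
    apply (is_derive_RInt (V:=R_NormedModule) E (RInt E 0) 0 s).
    - apply filter_forall. intro t. apply (RInt_correct (V:=R_CompleteNormedModule)). apply exRC, CE.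
    - apply CE. }
  assert (CW : forall s, continuous (weight alpha beta f g a b) s).
  { intro s. unfold continuous, weight. apply fl_mult. apply fl_plus; auto.
    apply (fl_comp1 exp). apply continuous_exp. apply fl_opp. apply CI. }
  assert (WB : forall s, Rabs (weight alpha beta f g a b s) <= 2 * exp (- RInt E 0 s)).
  { intro s. unfold weight. fold E. rewrite Rabs_mult. rewrite (Rabs_right (exp _)) by (apply Rle_ge, Rlt_le, exp_pos).
    pose proof (exp_pos (- RInt E 0 s)).
    apply Rmult_le_compat_r; [lra|]. eapply Rle_trans. apply Rabs_triang.
    rewrite Tu, Tv. pose proof (tan_bound (F1 s) (F2 s) (Hpos s)).
    pose proof (tan_bound (F2 s) (F1 s) ltac:(rewrite Rplus_comm; apply Hpos)).
    rewrite (Rplus_comm (F2 s ^ 2)) in H1. lra. }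
  pose proof (comp_lim (F := Rbar_locally' p_infty) a b Hnz Hap) as Hbp.
  assert (Hbm' : filterlim (fun s => b s / sqrt (b s ^ 2 + a s ^ 2)) (Rbar_locally' m_infty) (Lc 1)).
  { eapply filterlim_ext; [|exact Hbm]. intro s. simpl. rewrite Rplus_comm. reflexivity. }
  pose proof (comp_lim (F := Rbar_locally' m_infty) b a ltac:(intro s; rewrite Rplus_comm; apply Hnz) Hbm') as Ham.
  assert (Ham' : filterlim (fun s => a s / sqrt (a s ^ 2 + b s ^ 2)) (Rbar_locally' m_infty) (Lc 0)).
  { eapply filterlim_ext; [|exact Ham]. intro s. simpl. rewrite Rplus_comm. reflexivity. }
  pose proof (@lim_E alpha beta f g a b U HU HU0 Hf' Hg' f00 g00 fx0 fy0 gx0 gy0 Ha Hb Hnz Hpos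
      (Rbar_locally' p_infty) _ Lap Lbp 1 0 Hap Hbp ltac:(nra)) as LEp.
  pose proof (@lim_E alpha beta f g a b U HU HU0 Hf' Hg' f00 g00 fx0 fy0 gx0 gy0 Ha Hb Hnz Hpos
      (Rbar_locally' m_infty) _ Lam Lbm 0 1 Ham' Hbm ltac:(nra)) as LEm.
  rewrite val_p in LEp by lra. rewrite val_m in LEm by lra.
  fold E in LEp, LEm.
  assert (Hb2 : 0 < beta / 2) by lra.
  apply filterlim_locally with (eps := mkposreal _ Hb2) in LEp.
  apply filterlim_locally with (eps := mkposreal _ Hb2) in LEm.
  destruct LEp as [M1 HM1]. destruct LEm as [M2 HM2].
  assert (Hhp := C2 h 4%nat Hh).
  assert (Lhp : filterlim (fun s => h (a s) (b s)) (Rbar_locally' p_infty) (Lc (h 0 0))).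
  { apply fl_pair2; auto. apply (Ck_cont U HU 4%nat h Hh 0 0 HU0). }
  assert (Lhm : filterlim (fun s => h (a s) (b s)) (Rbar_locally' m_infty) (Lc (h 0 0))).
  { apply fl_pair2; auto. apply (Ck_cont U HU 4%nat h Hh 0 0 HU0). }
  apply filterlim_locally with (eps := mkposreal _ Rlt_0_1) in Lhp.
  apply filterlim_locally with (eps := mkposreal _ Rlt_0_1) in Lhm.
  destruct Lhp as [M3 HM3]. destruct Lhm as [M4 HM4].
  set (T := 1 + Rmax (Rmax (Rabs M1) (Rabs M2)) (Rmax (Rabs M3) (Rabs M4))).
  assert (HT1 : Rabs M1 < T /\ Rabs M2 < T /\ Rabs M3 < T /\ Rabs M4 < T).
  { unfold T. pose proof (Rmax_l (Rabs M1) (Rabs M2)). pose proof (Rmax_r (Rabs M1) (Rabs M2)).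
    pose proof (Rmax_l (Rabs M3) (Rabs M4)). pose proof (Rmax_r (Rabs M3) (Rabs M4)).
    pose proof (Rmax_l (Rmax (Rabs M1) (Rabs M2)) (Rmax (Rabs M3) (Rabs M4))).
    pose proof (Rmax_r (Rmax (Rabs M1) (Rabs M2)) (Rmax (Rabs M3) (Rabs M4))). lra. }
  destruct HT1 as [T1 [T2 [T3 T4]]].
  pose proof (Rle_abs M1). pose proof (Rle_abs M3). pose proof (Rabs_pos M1).
  assert (HM2' : forall s, s <= - T -> s < M2).
  { intros s Hs. pose proof (Rle_abs (- M2)). rewrite Rabs_Ropp in H2. lra. }
  assert (HM4' : forall s, s <= - T -> s < M4).
  { intros s Hs. pose proof (Rle_abs (- M4)). rewrite Rabs_Ropp in H2. lra. }
  assert (HT0 : 0 <= T) by lra.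
  destruct (exp_bound E (beta / 2) T Hb2 HT0 CE) as [EBr EBl].
  { intros s Hs. specialize (HM1 s ltac:(lra)). change (Rabs (E s - beta) < beta / 2) in HM1.
    apply Rabs_def2 in HM1. lra. }
  { intros s Hs. specialize (HM2 s (HM2' s Hs)). change (Rabs (E s - - alpha) < beta / 2) in HM2.
    apply Rabs_def2 in HM2. lra. }
  set (C := 2 * Rmax (exp (- RInt E 0 T + beta / 2 * T)) (exp (- RInt E 0 (- T) + beta / 2 * T))).
  assert (HC : 0 <= C).
  { unfold C. pose proof (Rmax_l (exp (- RInt E 0 T + beta / 2 * T)) (exp (- RInt E 0 (- T) + beta / 2 * T))).
    pose proof (exp_pos (- RInt E 0 T + beta / 2 * T)). lra. }
  assert (Wr : forall s, T <= s -> Rabs (weight alpha beta f g a b s) <= C * exp (- (beta / 2) * s)).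
  { intros s Hs. eapply Rle_trans. apply WB. specialize (EBr s Hs).
    pose proof (Rmax_l (exp (- RInt E 0 T + beta / 2 * T)) (exp (- RInt E 0 (- T) + beta / 2 * T))).
    pose proof (exp_pos (- (beta / 2) * s)). unfold C. nra. }
  assert (Wl : forall s, s <= - T -> Rabs (weight alpha beta f g a b s) <= C * exp (beta / 2 * s)).
  { intros s Hs. eapply Rle_trans. apply WB. specialize (EBl s Hs).
    pose proof (Rmax_r (exp (- RInt E 0 T + beta / 2 * T)) (exp (- RInt E 0 (- T) + beta / 2 * T))).
    pose proof (exp_pos (beta / 2 * s)). unfold C. nra. }
  split; [|split].
  - apply (conclude _ _ (beta / 2) C T (Rabs (h 0 0) + 1) Hb2 HT0 HC
      ltac:(pose proof (Rabs_pos (h 0 0)); lra) CW (fun s => C2 h 4%nat Hh s) Wr Wl).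
    intros s Hs. destruct (Rle_dec 0 s) as [l|l].
    + rewrite Rabs_right in Hs by lra. specialize (HM3 s ltac:(lra)).
      change (Rabs (h (a s) (b s) - h 0 0) < 1) in HM3.
      pose proof (Rabs_triang_inv (h (a s) (b s)) (h 0 0)). lra.
    + rewrite Rabs_left in Hs by lra. specialize (HM4 s (HM4' s ltac:(lra))).
      change (Rabs (h (a s) (b s) - h 0 0) < 1) in HM4.
      pose proof (Rabs_triang_inv (h (a s) (b s)) (h 0 0)). lra.
  - apply (conclude _ _ (beta / 2) C T 1 Hb2 HT0 HC ltac:(lra) CW); [| exact Wr | exact Wl |].
    + intro s. apply (fl_comp1 cos). apply continuous_cos. apply fl_mult. apply fl_const. apply filterlim_id.
    + intros. apply Rabs_le_between. pose proof (COS_bound (omega * s)). lra.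
  - apply (conclude _ _ (beta / 2) C T 1 Hb2 HT0 HC ltac:(lra) CW); [| exact Wr | exact Wl |].
    + intro s. apply (fl_comp1 sin). apply continuous_sin. apply fl_mult. apply fl_const. apply filterlim_id.
    + intros. apply Rabs_le_between. pose proof (SIN_bound (omega * s)). lra.
Qed.
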